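(* Let $G=(V,E)$ be a strongly biconnected directed graph and let $U_1,U_2$ be two distinct $2$-edge-biconnected blocks of $G$. Then $|U_1\cap U_2|\le 1$.
   Context: All graphs are finite. A directed graph $H$ is strongly biconnected if $H$ is strongly connected and its underlying undirected graph is biconnected. A strongly biconnected component of a directed graph $H=(W,F)$ is a maximal vertex subset $C\subseteq W$ such that the induced subgraph $H[C]$ is strongly biconnected. For a strongly biconnected directed graph $G=(V,E)$ and an edge $b\in E$, $G\setminus\{b\}=(V,E\setminus\{b\})$. For distinct $x,y\in V$, write $x \overset{e}{\leftrightsquigarrow} y$ if for every edge $b\in E$ there is a strongly biconnected component of $G\setminus\{b\}$ containing both $x$ and $y$. A $2$-edge-biconnected block of $G$ is a maximal vertex subset $U\subseteq V$ with $|U|>1$ such that $x \overset{e}{\leftrightsquigarrow} y$ for all distinct $x,y\in U$. *)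

(* Defs.v *)
(* Finite directed graphs: vertex type V : finType,
   edge set E : {set V * V} (a pair (x,y) is an edge x -> y). *)
From mathcomp Require Import all_boot.
Set Implicit Arguments.
Unset Strict Implicit.
Unset Printing Implicit Defensive.

Section Graphs.
Variable V : finType.

Definition darc (F : {set V * V}) (C : {set V}) : rel V :=
  fun x y => [&& (x, y) \in F, x \in C & y \in C].

Definition uarc (F : {set V * V}) (C : {set V}) : rel V :=
  fun x y => darc F C x y || darc F C y x.

Definition strongly_connected_on (F : {set V * V}) (C : {set V}) : bool :=
  [forall x in C, forall y in C, connect (darc F C) x y].

Definition uconnected_on (F : {set V * V}) (C : {set V}) : bool :=
  [forall x in C, forall y in C, connect (uarc F C) x y].

Definition biconnected_on (F : {set V * V}) (C : {set V}) : bool :=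
  uconnected_on F C && [forall v in C, uconnected_on F (C :\ v)].

Definition strongly_biconnected_on (F : {set V * V}) (C : {set V}) : bool :=
  strongly_connected_on F C && biconnected_on F C.

Definition sb_component (F : {set V * V}) (C : {set V}) : bool :=
  maxset (strongly_biconnected_on F) C.

Definition e_rel (E : {set V * V}) (x y : V) : bool :=
  [forall b in E, exists C : {set V},
     sb_component (E :\ b) C && (x \in C) && (y \in C)].

Definition two_edge_biconnected_block (E : {set V * V}) (U : {set V}) : bool :=
  maxset (fun U : {set V} =>
            (1 < #|U|) && [forall x in U, forall y in U, (x != y) ==> e_rel E x y])
         U.

End Graphs.

(* Main.v *)
Require Import Defs.
From mathcomp Require Import all_boot.

Set Implicit Arguments.
Unset Strict Implicit.
Unset Printing Implicit Defensive.

Section Proofs.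
Variable V : finType.

Definition conn_on (R : {set V} -> rel V) (A : {set V}) : bool :=
  [forall x in A, forall y in A, connect (R A) x y].

Definition rmono (R : {set V} -> rel V) :=
  forall (A B : {set V}) x y, A \subset B -> R A x y -> R B x y.

Lemma conn_mono R (Rm : rmono R) (A B : {set V}) (x y : V) :
  A \subset B -> connect (R A) x y -> connect (R B) x y.
Proof.
move=> sAB; apply: connect_sub => a b /(Rm _ _ _ _ sAB) h; exact: connect1.
Qed.

Lemma conn_union R (Rm : rmono R) (A B : {set V}) (z : V) :
  conn_on R A -> conn_on R B -> z \in A -> z \in B -> conn_on R (A :|: B).
Proof.
move=> /forall_inP hA /forall_inP hB zA zB.
have hz : forall x, x \in A :|: B ->
    connect (R (A :|: B)) x z /\ connect (R (A :|: B)) z x.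
  move=> x; case/setUP => xX.
    have /forall_inP h1 := hA x xX; have /forall_inP h2 := hA z zA.
    by split; apply: (conn_mono Rm (subsetUl A B)); [exact: h1 | exact: h2].
  have /forall_inP h1 := hB x xX; have /forall_inP h2 := hB z zB.
  by split; apply: (conn_mono Rm (subsetUr A B)); [exact: h1 | exact: h2].
apply/forall_inP => x xU; apply/forall_inP => y yU.
have [h1 _] := hz x xU; have [_ h2] := hz y yU; exact: connect_trans h1 h2.
Qed.

Lemma conn3 R (Rm : rmono R) (X Y Z : {set V}) (s t : V) :
  conn_on R X -> conn_on R Y -> conn_on R Z -> s \in X -> s \in Y ->
  t \in X :|: Y -> t \in Z -> conn_on R (X :|: Y :|: Z).
Proof.
move=> hX hY hZ sX sY tXY tZ.
apply: (conn_union Rm _ hZ tXY tZ); exact: (conn_union Rm hX hY sX sY).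
Qed.

Lemma darc_mono F : rmono (darc F).
Proof.
move=> A B x y sAB /and3P [e xA yA]; apply/and3P; split => //;
  exact: (subsetP sAB).
Qed.

Lemma uarc_mono F : rmono (uarc F).
Proof.
move=> A B x y sAB /orP [h|h]; apply/orP; [left|right];
  exact: (darc_mono sAB h).
Qed.

Lemma sb_piece F (X : {set V}) (v : V) : strongly_biconnected_on F X -> uconnected_on F (X :\ v).
Proof.
move=> /andP [_ /andP [hu /forall_inP hv]].
case: (boolP (v \in X)) => vX; first exact: hv.
have -> : X :\ v = X.
  apply/setP => z; rewrite in_setD1; case: eqP => // ->; by rewrite (negbTE vX).
exact: hu.
Qed.

Lemma sb_tri F (A B C : {set V}) (p q r : V) :
  strongly_biconnected_on F A -> strongly_biconnected_on F B ->
  strongly_biconnected_on F C ->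
  p \in A -> p \in B -> q \in B -> q \in C -> r \in C -> r \in A ->
  p != q -> q != r -> r != p ->
  strongly_biconnected_on F (A :|: B :|: C).
Proof.
move=> hA hB hC pA pB qB qC rC rA pq qr rp.
have qAB : q \in A :|: B by apply/setUP; right.
have hs : forall X, strongly_biconnected_on F X -> strongly_connected_on F X
  by move=> X /andP [].
have hu : forall X, strongly_biconnected_on F X -> uconnected_on F X
  by move=> X /andP [_ /andP []].
apply/andP; split.
  exact: (conn3 (@darc_mono F) (hs _ hA) (hs _ hB) (hs _ hC) pA pB qAB qC).
apply/andP; split.
  exact: (conn3 (@uarc_mono F) (hu _ hA) (hu _ hB) (hu _ hC) pA pB qAB qC).
apply/forall_inP => v _; rewrite !setDUl.
have iA := sb_piece v hA; have iB := sb_piece v hB; have iC := sb_piece v hC.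
have mem : forall x (X : {set V}), x \in X -> x != v -> x \in X :\ v
  by move=> x X xX xv; rewrite in_setD1 xv.
case: (eqVneq v p) => [vp|vp].
  subst v.
  have -> : A :\ p :|: B :\ p :|: C :\ p = B :\ p :|: C :\ p :|: A :\ p
    by rewrite -setUA setUC.
  apply: (conn3 (@uarc_mono F) iB iC iA (s := q) (t := r)).
  - by apply: mem; rewrite // eq_sym.
  - by apply: mem; rewrite // eq_sym.
  - by apply/setUP; right; apply: mem.
  - by apply: mem.
case: (eqVneq v q) => [vq|vq].
  subst v.
  apply: (conn3 (@uarc_mono F) iA iB iC (s := p) (t := r)).
  - by apply: mem.
  - by apply: mem.
  - by apply/setUP; left; apply: mem; rewrite // eq_sym.
  - by apply: mem; rewrite // eq_sym.
apply: (conn3 (@uarc_mono F) iA iB iC (s := p) (t := q)).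
- by rewrite in_setD1 eq_sym vp.
- by rewrite in_setD1 eq_sym vp.
- by apply/setUP; right; rewrite in_setD1 eq_sym vq.
- by rewrite in_setD1 eq_sym vq.
Qed.

Lemma comp_tri F (A B C : {set V}) (p q r : V) :
  sb_component F A -> sb_component F B -> sb_component F C ->
  p \in A -> p \in B -> q \in B -> q \in C -> r \in C -> r \in A ->
  p != q -> q != r -> r != p -> A = B /\ B = C.
Proof.
move=> /maxsetP [hA mA] /maxsetP [hB mB] /maxsetP [hC mC] pA pB qB qC rC rA pq qr rp.
have hU := sb_tri hA hB hC pA pB qB qC rC rA pq qr rp.
have eA := mA _ hU (subset_trans (subsetUl A B) (subsetUl _ C)).
have eB := mB _ hU (subset_trans (subsetUr A B) (subsetUl _ C)).
have eC := mC _ hU (subsetUr _ C).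
by split; [rewrite -eA eB | rewrite -eB eC].
Qed.

Definition blockP (E : {set V * V}) (U : {set V}) : bool :=
  (1 < #|U|) && [forall x in U, forall y in U, (x != y) ==> e_rel E x y].

Lemma block_rel E (U : {set V}) (x y : V) : two_edge_biconnected_block E U ->
  x \in U -> y \in U -> x != y -> e_rel E x y.
Proof.
move=> /maxsetP [/andP [_ /forall_inP h] _] xU yU xy.
by have /forall_inP /(_ y yU) /implyP := h x xU; apply.
Qed.

Lemma e_rel_sym E (x y : V) : e_rel E x y -> e_rel E y x.
Proof.
move=> /forall_inP h; apply/forall_inP => b bE.
have /existsP [C /andP [/andP [c1 c2] c3]] := h b bE.
by apply/existsP; exists C; rewrite c1 c2 c3.
Qed.

Lemma comp_of E (x y : V) b : e_rel E x y -> b \in E ->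
  exists C, [/\ sb_component (E :\ b) C, x \in C & y \in C].
Proof.
move=> /forall_inP h bE.
have /existsP [C /andP [/andP [c1 c2] c3]] := h b bE.
by exists C.
Qed.

Lemma triple E (U : {set V}) b (x y z : V) : two_edge_biconnected_block E U -> b \in E ->
  x \in U -> y \in U -> z \in U -> x != y -> y != z -> z != x ->
  exists C, [/\ sb_component (E :\ b) C, x \in C, y \in C & z \in C].
Proof.
move=> hU bE xU yU zU xy yz zx.
have [A [cA xA yA]] := comp_of (block_rel hU xU yU xy) bE.
have [B [cB yB zB]] := comp_of (block_rel hU yU zU yz) bE.
have [C [cC zC xC]] := comp_of (block_rel hU zU xU zx) bE.
have [eAB eBC] := comp_tri cA cB cC yA yB zB zC xC xA yz zx xy.
exists A; split => //; by rewrite eAB.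
Qed.

Lemma cross E (U1 U2 : {set V}) (x y u w : V) :
  two_edge_biconnected_block E U1 -> two_edge_biconnected_block E U2 ->
  x \in U1 -> x \in U2 -> y \in U1 -> y \in U2 -> x != y ->
  u \in U1 -> w \in U2 -> u != w -> e_rel E u w.
Proof.
move=> h1 h2 x1 x2 y1 y2 xy u1 w2 uw.
case: (boolP (u \in U2)) => u2; first exact: block_rel h2 u2 w2 uw.
case: (boolP (w \in U1)) => w1; first exact: block_rel h1 u1 w1 uw.
have ux : u != x by apply: contraNneq u2 => ->.
have uy : u != y by apply: contraNneq u2 => ->.
have wx : w != x by apply: contraNneq w1 => ->.
have wy : w != y by apply: contraNneq w1 => ->.
have yu : y != u by rewrite eq_sym.
have xu : x != u by rewrite eq_sym.
have yw : y != w by rewrite eq_sym.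
apply/forall_inP => b bE.
have [A [cA uA xA yA]] := triple h1 bE u1 x1 y1 ux xy yu.
have [D [cD wD xD yD]] := triple h2 bE w2 x2 y2 wx xy yw.
have [eAD _] := comp_tri cA cD cA xA xD yD yA uA uA xy yu ux.
by apply/existsP; exists A; rewrite cA uA eAD wD.
Qed.

End Proofs.

Theorem mainTheorem2 (V : finType) (E : {set V * V})
    (hG : strongly_biconnected_on E [set: V])
    (U1 U2 : {set V})
    (h1 : two_edge_biconnected_block E U1)
    (h2 : two_edge_biconnected_block E U2)
    (hne : U1 != U2) :
  #|U1 :&: U2| <= 1.
Proof.
rewrite leqNgt; apply/negP => /card_gt1P [x [y [xI yI xy]]].
move: xI yI; rewrite !inE => /andP [x1 x2] /andP [y1 y2].
have hP : blockP E (U1 :|: U2).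
  apply/andP; split.
    move: h1 => /maxsetP [/andP [c _] _].
    exact: leq_trans c (subset_leq_card (subsetUl _ _)).
  apply/forall_inP => a aU; apply/forall_inP => c cU; apply/implyP => ac.
  case/setUP: aU => aX; case/setUP: cU => cX.
  - exact: block_rel h1 aX cX ac.
  - exact: cross h1 h2 x1 x2 y1 y2 xy aX cX ac.
  - apply: e_rel_sym; apply: (cross h1 h2 x1 x2 y1 y2 xy cX aX); by rewrite eq_sym.
  - exact: block_rel h2 aX cX ac.
move: h1 h2 => /maxsetP [_ m1] /maxsetP [_ m2].
have e1 := m1 _ hP (subsetUl _ _); have e2 := m2 _ hP (subsetUr _ _).
by move/eqP: hne; apply; exact: etrans (esym e1) e2.
Qed.
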